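(* Let $\Delta$ be a tight SID and $\phi$ a tight sentence over $\Delta$. For every model $(\alpha,m)$ of $\phi$ (i.e. $(\alpha,m)\models_\Delta\phi$), the architecture $\alpha$ is tight.
   Context: Signature $\Sigma=(\mathfrak C,\mathfrak I,\mathfrak P)$: component types $\mathfrak C$, interaction types $\mathfrak I$ with arities $\#(\mathsf I)$, pairwise disjoint port sets $\mathfrak P(\mathsf C)$, port tuples $\mathfrak P(\mathsf I)$ of length $\#(\mathsf I)$; $\langle\mathfrak P(\mathsf I)\rangle_k$ is its $k$-th port. An architecture $\alpha$ gives $\alpha(\mathsf C)\subseteq\mathbb U$, $\alpha(\mathsf I)\subseteq\mathbb U^{\#(\mathsf I)}$. CL formulas $\phi::=\mathsf{emp}\mid\mathsf C(x)\mid\mathsf C^q(x)\mid\mathsf I(x_1..x_k)\mid\mathsf A(x_1..x_n)\mid\phi*\phi\mid\exists x.\phi$; SID = finite set of rules $\mathsf A(x_1..x_n)\leftarrow\phi$ with $\mathrm{fv}(\phi)=\{x_1..x_n\}$; $(\alpha,m)\models^s_\Delta\phi$ is the least relation where atoms $\mathsf C(x)$/$\mathsf C^q(x)$ denote the single component $\mathsf C[s(x)]$ with marking $\{q[s(x)]\}$ (for some/the given state $q$), $\mathsf I(\vec x)$ the single interaction $\mathsf I[s(\vec x)]$ with empty marking, $\mathsf{emp}$ the empty configuration, predicate atoms unfold by rules, $*$ is union of configurations with disjoint component sets and disjoint interaction relations, and $\exists$ chooses a value. An architecture $\alpha$ is tight if for each $\langle u_1..u_k\rangle\in\alpha(\mathsf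 I)$ and each $k'\in[1,k]$, $u_{k'}\in\alpha(\mathsf C)$ for the unique $\mathsf C$ with $\langle\mathfrak P(\mathsf I)\rangle_{k'}\in\mathfrak P(\mathsf C)$. A profile $\lambda$ maps each predicate symbol $\mathsf A$ of nonzero arity to a tuple of component types of length $\#(\mathsf A)$. A formula $\phi$ is tight for $\lambda$ if for every interaction atom $\mathsf I(x_1..x_k)$ of $\phi$ and every $j\in[1,k]$, $\phi$ contains a component atom $\mathsf C^q(x_j)$ with $\langle\mathfrak P(\mathsf I)\rangle_j\in\mathfrak P(\mathsf C)$, or a predicate atom $\mathsf A(y_1..y_n)$ with $x_j=y_\ell$ and $\langle\mathfrak P(\mathsf I)\rangle_j\in\mathfrak P(\langle\lambda(\mathsf A)\rangle_\ell)$ for some $\ell$. A SID $\Delta$ is tight if there is a profile $\lambda_\Delta$ such that for each rule $\mathsf A(x_1..x_n)\leftarrow\phi$, $\phi$ is tight for $\lambda_\Delta$ and for each $j\in[1,n]$, $\phi$ contains a component atom $\mathsf C^q(x_j)$ with $\langle\lambda_\Delta(\mathsf A)\rangle_j=\mathsf C$, or a predicate atom $\mathsf B(y_1..y_r)$ with $x_j=y_\ell$ and $\langle\lambda_\Delta(\mathsf A)\rangle_j=\langle\lambda_\Delta(\mathsf B)\rangle_\ell$ for some $\ell$. A formula over a tight SID $\Delta$ is tight if it is tight for $\lambda_\Delta$. *)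

(* Defs.v *)
From Stdlib Require Import List Arith.
Import ListNotations.
Set Implicit Arguments.

Record Signature := {
  CType : Type;
  IType : Type;
  Port  : Type;
  State : Type;
  PSym  : Type;
  cports : CType -> Port -> Prop;
  iarity : IType -> nat;
  iports : IType -> list Port;
  parity : PSym -> nat;
  iports_len : forall I, length (iports I) = iarity I;
  cports_disj : forall C C' p, cports C p -> cports C' p -> C = C'
}.

Arguments cports {_}. Arguments iarity {_}. Arguments iports {_}. Arguments parity {_}.

Definition var := nat.

Section CL.
Variable S : Signature.

Inductive form : Type :=
| Emp : form
| CompA : CType S -> var -> form
| CompQ : CType S -> State S -> var -> form
| Inter : IType S -> list var -> form
| PredA : PSym S -> list var -> form
| Sep : form -> form -> form
| Ex : var -> form -> form.

Fixpoint fv (f : form) : list var :=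
  match f with
  | Emp => []
  | CompA _ x => [x]
  | CompQ _ _ x => [x]
  | Inter _ xs => xs
  | PredA _ xs => xs
  | Sep f g => fv f ++ fv g
  | Ex x f => filter (fun y => negb (Nat.eqb y x)) (fv f)
  end.

Fixpoint bv (f : form) : list var :=
  match f with
  | Sep f g => bv f ++ bv g
  | Ex x f => x :: bv f
  | _ => []
  end.

Fixpoint atoms (f : form) : list form :=
  match f with
  | Sep f g => atoms f ++ atoms g
  | Ex _ f => atoms f
  | a => [a]
  end.

Definition atom_in (a f : form) : Prop := In a (atoms f).

Fixpoint wf_arity (f : form) : Prop :=
  match f with
  | Inter i xs => length xs = iarity i
  | PredA A xs => length xs = parity A
  | Sep f g => wf_arity f /\ wf_arity g
  | Ex _ f => wf_arity f
  | _ => True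
  end.

Definition var_conv (f : form) : Prop :=
  NoDup (bv f) /\ forall x, In x (bv f) -> ~ In x (fv f).

Record rule := { rhead : PSym S; rparams : list var; rbody : form }.

Definition wf_rule (r : rule) : Prop :=
  length (rparams r) = parity (rhead r) /\ NoDup (rparams r) /\
  (forall x, In x (fv (rbody r)) <-> In x (rparams r)) /\
  wf_arity (rbody r) /\ var_conv (rbody r).

Definition SID := list rule.
Definition wf_SID (D : SID) : Prop := Forall wf_rule D.

Variable U : Type.

Record arch := {
  acomp : CType S -> U -> Prop;
  aint  : IType S -> list U -> Prop
}.
Definition marking := State S -> U -> Prop.
Definition store := var -> U.

Definition upd (s : store) (x : var) (u : U) : store :=
  fun y => if Nat.eqb y x then u else s y.

Definition single_comp (a : arch) (m : marking) (C : CType S) (q : State S) (u : U) : Prop :=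
  (forall C' v, acomp a C' v <-> (C' = C /\ v = u)) /\
  (forall I t, ~ aint a I t) /\
  (forall q' v, m q' v <-> (q' = q /\ v = u)).

Inductive sat (D : SID) : arch -> marking -> store -> form -> Prop :=
| sat_emp : forall a m s,
    (forall C u, ~ acomp a C u) -> (forall I t, ~ aint a I t) ->
    (forall q u, ~ m q u) -> sat D a m s Emp
| sat_compA : forall a m s C x q,
    single_comp a m C q (s x) -> sat D a m s (CompA C x)
| sat_compQ : forall a m s C q x,
    single_comp a m C q (s x) -> sat D a m s (CompQ C q x)
| sat_inter : forall a m s I xs,
    (forall C u, ~ acomp a C u) ->
    (forall I' t, aint a I' t <-> (I' = I /\ t = map s xs)) ->
    (forall q u, ~ m q u) -> sat D a m s (Inter I xs)
| sat_pred : forall a m s A ys r s',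
    In r D -> rhead r = A ->
    Forall2 (fun x y => s' x = s y) (rparams r) ys ->
    sat D a m s' (rbody r) -> sat D a m s (PredA A ys)
| sat_sep : forall a m s f g a1 m1 a2 m2,
    sat D a1 m1 s f -> sat D a2 m2 s g ->
    (forall C u, acomp a1 C u -> acomp a2 C u -> False) ->
    (forall I t, aint a1 I t -> aint a2 I t -> False) ->
    (forall C u, acomp a C u <-> acomp a1 C u \/ acomp a2 C u) ->
    (forall I t, aint a I t <-> aint a1 I t \/ aint a2 I t) ->
    (forall q u, m q u <-> m1 q u \/ m2 q u) ->
    sat D a m s (Sep f g)
| sat_ex : forall a m s x f u,
    sat D a m (upd s x u) f -> sat D a m s (Ex x f).

Definition arch_tight (a : arch) : Prop :=
  forall I t, aint a I t ->
    forall k, k < iarity I ->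
      exists p u C, nth_error (iports I) k = Some p /\ nth_error t k = Some u /\
                    cports C p /\ acomp a C u.

Definition profile := PSym S -> list (CType S).
Definition wf_profile (lam : profile) : Prop :=
  forall A, length (lam A) = parity A.

Definition has_comp_atom (f : form) (C : CType S) (x : var) : Prop :=
  (exists q, atom_in (CompQ C q x) f) \/ atom_in (CompA C x) f.

Definition tight_form (lam : profile) (f : form) : Prop :=
  forall I xs, atom_in (Inter I xs) f ->
    forall j x p, nth_error xs j = Some x -> nth_error (iports I) j = Some p ->
      (exists C, has_comp_atom f C x /\ cports C p) \/
      (exists A ys l C, atom_in (PredA A ys) f /\ nth_error ys l = Some x /\
                        nth_error (lam A) l = Some C /\ cports C p).

Definition tight_SID_for (lam : profile) (D : SID) : Prop :=
  wf_profile lam /\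
  forall r, In r D ->
    tight_form lam (rbody r) /\
    forall j x C, nth_error (rparams r) j = Some x ->
                  nth_error (lam (rhead r)) j = Some C ->
      has_comp_atom (rbody r) C x \/
      (exists B ys l, atom_in (PredA B ys) (rbody r) /\ nth_error ys l = Some x /\
                      nth_error (lam B) l = Some C).

End CL.

(* Main.v *)
Require Import Defs.
From Stdlib Require Import List Arith Lia.
Import ListNotations.

Definition comp_ok {S : Signature} {U : Type} (a : arch S U) (s : store U) (f : form S) :=
  forall C x, has_comp_atom f C x -> acomp a C (s x).
Definition pred_ok {S : Signature} {U : Type} (lam : profile S) (a : arch S U) (s : store U) (f : form S) :=
  forall A ys l y C, atom_in (PredA _ A ys) f -> nth_error ys l = Some y ->
    nth_error (lam A) l = Some C -> acomp a C (s y).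
Definition ttup {S : Signature} {U : Type} (a : arch S U) (I : IType S) (t : list U) :=
  forall k, k < iarity I ->
      exists p u C, nth_error (iports I) k = Some p /\ nth_error t k = Some u /\
                    cports C p /\ acomp a C u.
Definition int_ok {S : Signature} {U : Type} (a : arch S U) (s : store U) (f : form S) :=
  forall I t, aint a I t -> (exists xs, atom_in (Inter _ I xs) f /\ t = map s xs) \/ ttup a I t.

Lemma atom_vars {S : Signature} (f atm : form S) y :
  atom_in atm f -> In y (fv atm) -> In y (fv f) \/ In y (bv f).
Proof.
  unfold atom_in; induction f; simpl; intros Ha Hy;
    try (destruct Ha as [<-|[]]; simpl in Hy; auto; fail).
  - apply in_app_or in Ha as [Ha|Ha].
    + destruct (IHf1 Ha Hy); [left|right]; apply in_or_app; auto.
    + destruct (IHf2 Ha Hy); [left|right]; apply in_or_app; auto.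
  - destruct (IHf Ha Hy) as [H|H].
    + destruct (Nat.eq_dec y v) as [->|n]; [right; left; auto|].
      left. apply filter_In. split; auto. apply Bool.negb_true_iff, Nat.eqb_neq; auto.
    + right; right; auto.
Qed.

Lemma wf_inter {S : Signature} (f : form S) I xs :
  wf_arity f -> atom_in (Inter _ I xs) f -> length xs = iarity I.
Proof.
  unfold atom_in; induction f; simpl; intros W Ha;
    try (destruct Ha as [Ha|[]]; discriminate).
  - destruct Ha as [Ha|[]]; inversion Ha; subst; auto.
  - destruct W; apply in_app_or in Ha as [Ha|Ha]; auto.
  - auto.
Qed.

Lemma derive {S : Signature} {U : Type} (lam : profile S) (a : arch S U) s (f : form S) I xs :
  comp_ok a s f -> pred_ok lam a s f -> wf_arity f -> tight_form lam f ->
  atom_in (Inter _ I xs) f -> ttup a I (map s xs).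
Proof.
  intros Hc Hp W T Ha k Hk.
  pose proof (wf_inter _ _ _ W Ha) as L.
  destruct (nth_error (iports I) k) as [p|] eqn:Ep;
    [|apply nth_error_None in Ep; rewrite iports_len in Ep; lia].
  destruct (nth_error xs k) as [x|] eqn:Ex;
    [|apply nth_error_None in Ex; lia].
  destruct (T I xs Ha k x p Ex Ep) as [[C [H1 H2]]|[A [ys [l [C [H1 [H2 [H3 H4]]]]]]]].
  - exists p, (s x), C. rewrite nth_error_map, Ex. repeat split; auto.
  - exists p, (s x), C. rewrite nth_error_map, Ex. repeat split; auto.
    eapply Hp; eauto.
Qed.

Lemma var_conv_sep {S : Signature} (f g : form S) :
  var_conv (Sep f g) -> var_conv f /\ var_conv g.
Proof.
  unfold var_conv; simpl; intros [N H].
  pose proof (NoDup_app_remove_r _ _ N). pose proof (NoDup_app_remove_l _ _ N).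
  split; split; auto; intros x Hb Hf; apply (H x); apply in_or_app; auto.
Qed.

Lemma var_conv_ex {S : Signature} x (f : form S) :
  var_conv (Ex x f) -> var_conv f.
Proof.
  unfold var_conv; simpl; intros [N H]. inversion N; subst.
  split; auto. intros y Hb Hf.
  destruct (Nat.eq_dec y x) as [->|n]; [auto|].
  apply (H y); auto. apply filter_In; split; auto.
  apply Bool.negb_true_iff, Nat.eqb_neq; auto.
Qed.

Definition agree {S : Signature} {U : Type} (s s' : store U) (f : form S) :=
  forall atm y, atom_in atm f -> In y (fv atm) -> s y = s' y.

Lemma transfer {S : Signature} {U : Type} lam (a : arch S U) s s' (f : form S) :
  agree s s' f -> comp_ok a s f /\ pred_ok lam a s f /\ int_ok a s f ->
  comp_ok a s' f /\ pred_ok lam a s' f /\ int_ok a s' f.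
Proof.
  intros Ag [Hc [Hp Hi]]; split; [|split].
  - intros C x H. pose proof (Hc C x H) as H'.
    destruct H as [[q H]|H].
    + rewrite <- (Ag _ x H); simpl; auto.
    + rewrite <- (Ag _ x H); simpl; auto.
  - intros A ys l y C H1 H2 H3. rewrite <- (Ag _ y H1).
    + eapply Hp; eauto.
    + simpl. eapply nth_error_In; eauto.
  - intros I t Ht. destruct (Hi I t Ht) as [[xs [H1 H2]]|H]; [left|right; auto].
    exists xs; split; auto. subst t. apply map_ext_in. intros y Hy. apply (Ag _ y H1); auto.
Qed.

Lemma Forall2_nth {A B : Type} (R : A -> B -> Prop) l1 l2 k y :
  Forall2 R l1 l2 -> nth_error l2 k = Some y -> exists x, nth_error l1 k = Some x /\ R x y.
Proof.
  intros H; revert k; induction H; intros [|k] E; simpl in *; try discriminate.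
  - inversion E; subst; eauto.
  - auto.
Qed.

Lemma nodup_app_disj {A : Type} (l1 l2 : list A) y :
  NoDup (l1 ++ l2) -> In y l1 -> In y l2 -> False.
Proof.
  induction l1; simpl; intros N H1 H2; [auto|].
  inversion N; subst. destruct H1 as [->|H1]; eauto.
  apply H3. apply in_or_app; auto.
Qed.

Lemma combine_sep {S : Signature} {U : Type} lam (a a1 a2 : arch S U) s (f g : form S) :
  (forall C u, acomp a C u <-> acomp a1 C u \/ acomp a2 C u) ->
  (forall I t, aint a I t <-> aint a1 I t \/ aint a2 I t) ->
  comp_ok a1 s f /\ pred_ok lam a1 s f /\ int_ok a1 s f ->
  comp_ok a2 s g /\ pred_ok lam a2 s g /\ int_ok a2 s g ->
  comp_ok a s (Sep f g) /\ pred_ok lam a s (Sep f g) /\ int_ok a s (Sep f g).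
Proof.
  intros HC HI [C1 [P1 I1]] [C2 [P2 I2]].
  assert (M1 : forall C u, acomp a1 C u -> acomp a C u) by (intros; apply HC; auto).
  assert (M2 : forall C u, acomp a2 C u -> acomp a C u) by (intros; apply HC; auto).
  unfold comp_ok, pred_ok, int_ok, has_comp_atom, atom_in in *; simpl.
  split; [|split].
  - intros C x [[q H]|H]; apply in_app_or in H as [H|H]; eauto.
  - intros A ys l y C H; apply in_app_or in H as [H|H]; eauto.
  - intros I t Ht. apply HI in Ht as [Ht|Ht].
    + destruct (I1 I t Ht) as [[xs [H1 H2]]|H]; [left; exists xs; split; auto; apply in_or_app; auto|].
      right; intros k Hk; destruct (H k Hk) as [p [u [C [? [? [? ?]]]]]]; exists p, u, C; auto.
    + destruct (I2 I t Ht) as [[xs [H1 H2]]|H]; [left; exists xs; split; auto; apply in_or_app; auto|].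
      right; intros k Hk; destruct (H k Hk) as [p [u [C [? [? [? ?]]]]]]; exists p, u, C; auto.
Qed.

Lemma mainL {S : Signature} {U : Type} (D : SID S) lam (a : arch S U) m s f :
  wf_SID D -> tight_SID_for lam D -> sat D a m s f -> var_conv f ->
  exists s', (forall y, ~ In y (bv f) -> s' y = s y) /\
    comp_ok a s' f /\ pred_ok lam a s' f /\ int_ok a s' f.
Proof.
  intros WD TD H. induction H; intros VC.
  - exists s; split; [auto|split; [|split]].
    + intros C x [[q Ha]|Ha]; destruct Ha as [Ha|[]]; discriminate.
    + intros A ys l y C Ha; destruct Ha as [Ha|[]]; discriminate.
    + intros I t Ht; exfalso; eapply H0; eauto.
  - exists s; split; [auto|split; [|split]].
    + intros C' x' [[q' Ha]|Ha]; destruct Ha as [Ha|[]]; try discriminate.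
      inversion Ha; subst. apply H; auto.
    + intros A ys l y C' Ha; destruct Ha as [Ha|[]]; discriminate.
    + intros I t Ht; exfalso; eapply (proj1 (proj2 H)); eauto.
  - exists s; split; [auto|split; [|split]].
    + intros C' x' [[q' Ha]|Ha]; destruct Ha as [Ha|[]]; try discriminate.
      inversion Ha; subst. apply H; auto.
    + intros A ys l y C' Ha; destruct Ha as [Ha|[]]; discriminate.
    + intros I t Ht; exfalso; eapply (proj1 (proj2 H)); eauto.
  - exists s; split; [auto|split; [|split]].
    + intros C' x' [[q' Ha]|Ha]; destruct Ha as [Ha|[]]; discriminate.
    + intros A ys l y C' Ha; destruct Ha as [Ha|[]]; discriminate.
    + intros I' t Ht. left. apply H0 in Ht as [-> ->]. exists xs; split; auto. left; auto.
  - pose proof (proj1 (Forall_forall _ _) WD r H) as [WL [WN [Wfv [War Wvc]]]].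
    destruct (IHsat Wvc) as [s1 [Hs1 [Hc [Hp Hi]]]].
    destruct (proj2 TD r H) as [Tb Tp].
    exists s; split; [auto|split; [|split]].
    + intros C' x' [[q' Ha]|Ha]; destruct Ha as [Ha|[]]; discriminate.
    + intros A' ys' l y C Ha; destruct Ha as [Ha|[]]; inversion Ha; subst A' ys'.
      intros E1 E2.
      destruct (Forall2_nth _ _ _ _ _ H1 E1) as [x [Ex Rx]].
      rewrite <- Rx.
      assert (Hx : acomp a C (s1 x)).
      { subst A. destruct (Tp l x C Ex E2) as [Hca|[B [zs [l' [H3 [H4 H5]]]]]].
        - apply Hc; auto.
        - eapply Hp; eauto. }
      rewrite Hs1 in Hx; auto.
      intros Hb. apply (proj2 Wvc x Hb). apply Wfv. eapply nth_error_In; eauto.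
    + intros I t Ht. right. destruct (Hi I t Ht) as [[xs [H3 ->]]|Ht']; auto.
      eapply derive; eauto.
  - apply var_conv_sep in VC as VC'. destruct VC' as [V1 V2].
    destruct (IHsat1 V1) as [s1 [E1 P1]]. destruct (IHsat2 V2) as [s2 [E2 P2]].
    set (s' := fun y => if in_dec Nat.eq_dec y (bv f) then s1 y else s2 y).
    destruct VC as [ND VB]. simpl in ND, VB.
    assert (A1 : agree s1 s' f).
    { intros atm y Ha Hy. unfold s'. destruct (in_dec Nat.eq_dec y (bv f)); auto.
      destruct (atom_vars _ _ _ Ha Hy) as [Hf|Hf]; [|contradiction].
      rewrite E1, E2; auto. intros Hg. apply (VB y); apply in_or_app; auto. }
    assert (A2 : agree s2 s' g).
    { intros atm y Ha Hy. unfold s'. destruct (in_dec Nat.eq_dec y (bv f)) as [i|n]; auto.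
      exfalso. destruct (atom_vars _ _ _ Ha Hy) as [Hf|Hf].
      - apply (VB y); apply in_or_app; auto.
      - eapply nodup_app_disj; eauto. }
    exists s'. split.
    + intros y Hy. unfold s'. destruct (in_dec Nat.eq_dec y (bv f)) as [i|n].
      * exfalso; apply Hy; apply in_or_app; auto.
      * apply E2. intros Hg; apply Hy; apply in_or_app; auto.
    + apply (transfer lam a1) in A1; auto. apply (transfer lam a2) in A2; auto.
      eapply combine_sep; eauto.
  - apply var_conv_ex in VC. destruct (IHsat VC) as [s1 [E1 P1]].
    exists s1; split; auto. intros y Hy. rewrite E1.
    + unfold upd. destruct (Nat.eqb_spec y x); subst; auto. exfalso; apply Hy; left; auto.
    + intros Hb; apply Hy; right; auto.
Qed.

Theorem mainTheorem7 (S : Signature) (U : Type) (D : SID S)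
  (lam : profile S) (phi : form S) :
  wf_SID D ->
  tight_SID_for lam D ->
  fv phi = nil -> wf_arity phi -> var_conv phi ->
  tight_form lam phi ->
  forall (a : arch S U) (m : marking S U) (s : store U),
    sat D a m s phi -> arch_tight a.
Proof.
  intros WD TD Hfv War VC Tphi a m s H I t Ht.
  destruct (mainL D lam a m s phi WD TD H VC) as [s1 [_ [Hc [Hp Hi]]]].
  destruct (Hi I t Ht) as [[xs [H1 ->]]|H2]; auto.
  eapply derive; eauto.
Qed.
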